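(* Let $P\subset\mathbb{R}^4$ be the set of $(e_1,\dots,e_4)$ with $e_1\le e_2\le e_3\le e_4$ and $e_{i+j}\le e_i+e_j$ for all $i,j\ge1$ with $i+j\le4$. Let $Q\subset\mathbb{R}^4\times\mathbb{R}^5$ be the set of $(e_1,\dots,e_4,f_1,\dots,f_5)$ such that $e_1\le\dots\le e_4$, $f_1\le\dots\le f_5$, $2\sum_{k=1}^4e_k=\sum_{i=1}^5f_i$, and, writing $N=\sum_k e_k$ and $d^{(k)}_{ij}=f_i+f_j+e_k-N$: (i) $d^{(k)}_{ij}\ge0$ for all $1\le i<j\le5$, $1\le k\le4$ with $i+j+k=8$; (ii) if $d^{(1)}_{15}<0$, $d^{(1)}_{24}<0$ and $d^{(4)}_{12}<0$ then $d^{(1)}_{25}=0$. Let $\mathrm{pr}\colon\mathbb{R}^4\times\mathbb{R}^5\to\mathbb{R}^4$ be the projection to the first four coordinates. Then $\mathrm{pr}(Q\cap\mathbb{Z}^9)=P\cap\mathbb{Z}^4$. *)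

(* Defs.v *)
(* Points of R^4 / R^5 are functions 'I_4 -> R, 'I_5 -> R;
   coordinates are accessed 1-based via [cd]. *)
From mathcomp Require Import all_boot all_order all_algebra.
Set Implicit Arguments. Unset Strict Implicit. Unset Printing Implicit Defensive.
Import Order.TTheory GRing.Theory Num.Theory.
Local Open Scope ring_scope.

Definition cd {R : Type} {n : nat} (x : 'I_n.+1 -> R) (k : nat) : R :=
  x (inord k.-1).

Definition inP {R : realDomainType} (e : 'I_4 -> R) : Prop :=
  (forall k : nat, (1 <= k < 4)%N -> cd e k <= cd e k.+1) /\
  (forall i j : nat, (1 <= i)%N -> (1 <= j)%N -> (i + j <= 4)%N ->
      cd e (i + j) <= cd e i + cd e j).

Definition Nsum {R : realDomainType} (e : 'I_4 -> R) : R := \sum_(k < 4) e k.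

Definition dd {R : realDomainType} (e : 'I_4 -> R) (f : 'I_5 -> R)
  (k i j : nat) : R := cd f i + cd f j + cd e k - Nsum e.

Definition inQ {R : realDomainType} (e : 'I_4 -> R) (f : 'I_5 -> R) : Prop :=
  (forall k : nat, (1 <= k < 4)%N -> cd e k <= cd e k.+1) /\
  (forall k : nat, (1 <= k < 5)%N -> cd f k <= cd f k.+1) /\
  2 * Nsum e = \sum_(i < 5) f i /\
  (forall i j k : nat, (1 <= i)%N -> (i < j)%N -> (j <= 5)%N ->
      (1 <= k <= 4)%N -> (i + j + k = 8)%N -> 0 <= dd e f k i j) /\
  (dd e f 1 1 5 < 0 -> dd e f 1 2 4 < 0 -> dd e f 4 1 2 < 0 ->
      dd e f 1 2 5 = 0).

(* Main.v *)
Require Import Defs.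
From mathcomp Require Import all_boot all_order all_algebra zify.
Import Order.TTheory GRing.Theory Num.Theory.
Local Open Scope ring_scope.

Lemma sum4 (x : 'I_4 -> int) : \sum_(k < 4) x k = x (inord 0) + x (inord 1) + x (inord 2) + x (inord 3).
Proof.
rewrite !big_ord_recr big_ord0 /= add0r.
by congr (_ + _ + _ + _); congr x; apply/val_inj; rewrite /= inordK.
Qed.
Lemma sum5 (x : 'I_5 -> int) : \sum_(k < 5) x k = x (inord 0) + x (inord 1) + x (inord 2) + x (inord 3) + x (inord 4).
Proof.
rewrite !big_ord_recr big_ord0 /= add0r.
by congr (_ + _ + _ + _ + _); congr x; apply/val_inj; rewrite /= inordK.
Qed.

Definition mkf (x : seq int) : 'I_5 -> int := fun i => nth 0 x i.
Lemma cdl (x : seq int) k : (1 <= k <= 5)%N -> cd (mkf x) k = nth 0 x k.-1.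
Proof. by case/andP=> k1 k5; rewrite /cd /mkf inordK //; case: k k1 k5. Qed.
Lemma mkfi (x : seq int) k : (k < 5)%N -> mkf x (inord k) = nth 0 x k.
Proof. by move=> h; rewrite /mkf inordK. Qed.

Ltac solveQ :=
  split; [| split; [| split; [| split]]];
  [ move=> [|[|[|[|?]]]] //= _; rewrite /cd /=; lia
  | move=> [|[|[|[|[|?]]]]] //= _; rewrite !cdl //=; lia
  | rewrite /Nsum sum4 sum5 !mkfi //=; lia
  | move=> [|[|[|[|[|?]]]]] [|[|[|[|[|[|?]]]]]] [|[|[|[|[|?]]]]] //= _ _ _ _ _;
    rewrite /dd !cdl // /Nsum sum4 /cd /=; lia
  | move=> _ _ _; rewrite /dd !cdl // /Nsum sum4 /cd /=; lia ].

Lemma QP (e : 'I_4 -> int) f : inQ e f -> inP e.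
Proof.
move=> [He [Hf [Hs [Hd Hii]]]].
have := Hd 2%N 5%N 1%N isT isT isT isT erefl.
have := Hd 3%N 4%N 1%N isT isT isT isT erefl.
have := Hd 1%N 5%N 2%N isT isT isT isT erefl.
have := Hd 2%N 4%N 2%N isT isT isT isT erefl.
have := Hd 1%N 4%N 3%N isT isT isT isT erefl.
have := Hd 2%N 3%N 3%N isT isT isT isT erefl.
have := Hd 1%N 3%N 4%N isT isT isT isT erefl.
have := He 1%N isT; have := He 2%N isT; have := He 3%N isT.
have := Hf 1%N isT; have := Hf 2%N isT; have := Hf 3%N isT; have := Hf 4%N isT.
move: Hs; rewrite /dd /Nsum /cd sum4 sum5 /= => *.
split.
- move=> k /andP[k1 k4]; by apply: He; rewrite k1.
- move=> i j i1 j1 ij.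
  case: i i1 ij => [|[|[|[|i]]]] // _; case: j j1 => [|[|[|[|j]]]] // _;
  rewrite ?(add0n, addSn) => ij; rewrite /cd /=; lia.
Qed.
Lemma PQ (e : 'I_4 -> int) : inP e -> exists f, inQ e f.
Proof.
move=> [He Hs].
have := He 1%N isT; have := He 2%N isT; have := He 3%N isT.
have := Hs 1%N 1%N isT isT isT; have := Hs 1%N 2%N isT isT isT.
have := Hs 1%N 3%N isT isT isT; have := Hs 2%N 2%N isT isT isT.
rewrite /cd ?(add0n, addSn) /= => h1 h2 h3 h4 h5 h6 h7.
set a := e (inord 0) in h1 h2 h3 h4 h5 h6 h7 *.
set b := e (inord 1) in h1 h2 h3 h4 h5 h6 h7 *.
set c := e (inord 2) in h1 h2 h3 h4 h5 h6 h7 *.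
set d := e (inord 3) in h1 h2 h3 h4 h5 h6 h7 *.
have [H1|H1] := lerP d (2 * a).
  exists (mkf [:: d; b + d - a; a + b; a + c; a + c]); solveQ.
have [H2|H2] := boolP ((2 * a + c <= b + d) && (a + c <= 2 * b)).
  move/andP: H2 => [H2 H2'].
  exists (mkf [:: 2 * a; a + b; a + c; b + d - a; c + d - a]); solveQ.
have [H3|H3] := boolP ((3 * b <= c + d) && (2 * b <= a + c)).
  move/andP: H3 => [H3 H3'].
  exists (mkf [:: 2 * a; a + b; 2 * b; c + d - b; c + d - a]); solveQ.
move: H2 H3; rewrite !negb_and -!ltNge => H2 H3.
exists (mkf [:: 2 * a; d; b + d - a; a + c; b + c]); solveQ.
Qed.

Theorem lemma6p2 (e : 'I_4 -> int) :
  inP e <-> exists f : 'I_5 -> int, inQ e f.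
Proof.
split; [exact: PQ | by move=> [f]; apply: QP].
Qed.
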